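(* The position operators $G_i=A_i+A_i^\dagger$, $i\geq1$, are monotone independent with respect to the vacuum state $\omega_\Omega(X)=\langle \Omega,X\Omega\rangle$ on the bounded operators on $\mathfrak F_{WM}(\mathcal H)$: if $\mathcal C_i$ denotes the non-unital $*$-algebra generated by $G_i$ (polynomials in $G_i$ without constant term), then (M1) for $i<j>k$ and $p_i\in\mathcal C_i,p_j\in\mathcal C_j,p_k\in\mathcal C_k$ one has $p_ip_jp_k=\omega_\Omega(p_j)p_ip_k$, and (M2) for $j_1>\cdots>j_k<\cdots<j_n$ and $p_{j_m}\in\mathcal C_{j_m}$ one has $\omega_\Omega(p_{j_1}\cdots p_{j_n})=\prod_{m=1}^n\omega_\Omega(p_{j_m})$.
   Context: Let $\mathcal H$ be a separable Hilbert space with a fixed orthonormal basis $\{e_i: i\geq 1\}$, and $\mathfrak F(\mathcal H)=\bigoplus_{n\ge 0}\mathcal H^{\otimes n}$ its full Fock space with vacuum vector $\Omega$. The weakly monotone Fock space $\mathfrak F_{WM}(\mathcal H)$ is the closed subspace of $\mathfrak F(\mathcal H)$ spanned by $\Omega$ and all simple tensors $e_{i_k}\otimes e_{i_{k-1}}\otimes\cdots\otimes e_{i_1}$ with $k\geq 1$ and $i_k\geq i_{k-1}\geq\cdots\geq i_1$. For $i\geq1$ the weakly monotone annihilation operator $A_i$ and creation operator $A_i^\dagger$ are the bounded operators on $\mathfrak F_{WM}(\mathcal H)$ defined on this spanning set by $A_i\Omega=0$, $A_i(e_{i_k}\otimes\cdots\otimes e_{i_1})=\delta_{i,i_k}\,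 e_{i_{k-1}}\otimes\cdots\otimes e_{i_1}$ (interpreted as $\delta_{i,i_1}\Omega$ when $k=1$), $A_i^\dagger\Omega=e_i$, and $A_i^\dagger(e_{i_k}\otimes\cdots\otimes e_{i_1})=e_i\otimes e_{i_k}\otimes\cdots\otimes e_{i_1}$ if $i\geq i_k$ and $=0$ if $i<i_k$. They are mutually adjoint, of norm one. The position operators are $G_i:=A_i+A_i^\dagger$ (self-adjoint). *)

(* Defs.v *)
From HB Require Import structures.
From mathcomp Require Import all_boot all_order all_algebra.
Set Implicit Arguments. Unset Strict Implicit. Unset Printing Implicit Defensive.
Import Order.TTheory GRing.Theory Num.Theory.
Local Open Scope ring_scope.

(* Basis of the weakly monotone Fock space: the word [:: i_k; ...; i_1]
   stands for e_{i_k} (x) ... (x) e_{i_1}; the empty word is the vacuum Omega. *)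
Definition wm_word (w : seq nat) : bool :=
  all (fun x => 0 < x)%N w && sorted (fun a b => b <= a)%N w.

(* Vectors are given by their coefficients on the basis words
   (only coefficients of valid words are ever read or produced). *)
Definition vec (R : numClosedFieldType) := seq nat -> R.

Definition basisv (R : numClosedFieldType) (w : seq nat) : vec R :=
  fun u => if u == w then 1 else 0.

Definition vacuum (R : numClosedFieldType) : vec R := basisv R [::].

Definition ann (R : numClosedFieldType) (i : nat) (v : vec R) : vec R :=
  fun w => if wm_word (i :: w) then v (i :: w) else 0.

Definition cre (R : numClosedFieldType) (i : nat) (v : vec R) : vec R :=
  fun u => match u with
           | [::] => 0
           | i' :: w => if (i' == i) && wm_word u then v w else 0
           end.

Definition posop (R : numClosedFieldType) (i : nat) (v : vec R) : vec R :=
  fun w => ann i v w + cre i v w.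

Definition poly_op (R : numClosedFieldType) (p : {poly R}) (i : nat)
  (v : vec R) : vec R :=
  fun w => \sum_(n < size p) p`_n * iter n (posop i) v w.

Definition no_const (R : numClosedFieldType) (p : {poly R}) : bool :=
  p`_0 == 0.

Definition omega (R : numClosedFieldType) (X : vec R -> vec R) : R :=
  X (vacuum R) [::].

(* product p_{j_1} ... p_{j_n} (as operator, first factor outermost) *)
Definition prod_op (R : numClosedFieldType) (jps : seq (nat * {poly R}))
  (v : vec R) : vec R :=
  foldr (fun jp u => poly_op jp.2 jp.1 u) v jps.

(* Main.v *)
Require Import Defs.
From HB Require Import structures.
From mathcomp Require Import all_boot all_order all_algebra.
From Stdlib Require Import FunctionalExtensionality.
Import Order.TTheory GRing.Theory Num.Theory.
Set Implicit Arguments. Unset Strict Implicit.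
Local Open Scope ring_scope.

Section H.
Variable R : numClosedFieldType.

Definition nstart (j : nat) (u : seq nat) := if u is a :: _ then a != j else true.
Definition good j (v : vec R) :=
  (forall u, ~~ wm_word u -> v u = 0) /\ (forall a u, (j <= a)%N -> v (a :: u) = 0).
Definition scale (a : R) (v : vec R) : vec R := fun u => a * v u.

Lemma wm_cons a s : wm_word (a :: s) =
  [&& (0 < a)%N, wm_word s & (if s is b :: _ then (b <= a)%N else true)].
Proof.
rewrite /wm_word /=; case: s => [|b s] /=; first by rewrite !andbT.
by case: (0 < a)%N; case: (0 < b)%N; case: (b <= a)%N; case: (all _ _); case: (path _ _ _).
Qed.

Lemma posop_invalid i (f : vec R) u : ~~ wm_word u -> posop i f u = 0.
Proof.
move=> hu; rewrite /posop /ann /cre.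
have -> : wm_word (i :: u) = false by rewrite wm_cons (negbTE hu) andbF.
case: u hu => [|i' w] hu; first by rewrite add0r.
by rewrite (negbTE hu) andbF add0r.
Qed.

Lemma posop_high k (f : vec R) a u : (k < a)%N -> posop k f (a :: u) = 0.
Proof.
move=> hk; rewrite /posop /ann /cre wm_cons /=.
rewrite [(a <= k)%N]leqNgt hk !andbF add0r.
by have -> : (a == k) = false by apply/negbTE; rewrite neq_ltn hk orbT.
Qed.

Lemma poly_op_zero p i (f : vec R) u : no_const p ->
  (forall g : vec R, posop i g u = 0) -> poly_op p i f u = 0.
Proof.
move=> /eqP hp hz; rewrite /poly_op big1 // => [[[|n] hn]] _ /=.
  by rewrite hp mul0r.
by rewrite hz mulr0.
Qed.

Lemma good_out p k j (f : vec R) : no_const p -> (k < j)%N -> good j (poly_op p k f).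
Proof.
move=> hp hkj; split=> [u hu|a u ha]; apply: poly_op_zero => // g.
  exact: posop_invalid.
apply: posop_high; exact: leq_trans hkj ha.
Qed.

Lemma good_vac j : good j (vacuum R).
Proof. by split=> [[|a u]|a u] //=; rewrite /vacuum /basisv. Qed.

Lemma posop_agree i j (v v' : vec R) : (i < j)%N ->
  (forall u, nstart j u -> v u = v' u) -> posop i v = posop i v'.
Proof.
move=> hij hv; apply: functional_extensionality => w.
rewrite /posop /ann /cre hv; last by rewrite /= neq_ltn hij.
congr (_ + _); case: w => [|i' w] //.
case: ifP => // /andP [/eqP -> hw]; rewrite hv //.
move: hw; rewrite wm_cons; case: w => [|b w] //= /and3P [_ _ hb].
by rewrite neq_ltn (leq_ltn_trans hb hij).
Qed.

Lemma poly_op_agree p i j (v v' : vec R) : no_const p -> (i < j)%N ->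
  (forall u, nstart j u -> v u = v' u) -> poly_op p i v = poly_op p i v'.
Proof.
move=> /eqP hp hij hv; apply: functional_extensionality => w.
rewrite /poly_op; apply: eq_bigr => [[[|n] hn]] _.
  by rewrite /= hp !mul0r.
by rewrite !iterSr (posop_agree hij hv).
Qed.

Lemma posop_scale i a (v : vec R) : posop i (scale a v) = scale a (posop i v).
Proof.
apply: functional_extensionality => w.
rewrite /posop /ann /cre /scale mulrDr; congr (_ + _).
  by case: ifP; rewrite ?mulr0.
by case: w => [|i' w]; rewrite ?mulr0 //; case: ifP; rewrite ?mulr0.
Qed.

Lemma iter_scale n i a (v : vec R) :
  iter n (posop i) (scale a v) = scale a (iter n (posop i) v).
Proof. by elim: n => [|n IH] //=; rewrite IH posop_scale. Qed.

Lemma poly_op_scale p i a (v : vec R) : poly_op p i (scale a v) = scale a (poly_op p i v).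
Proof.
apply: functional_extensionality => w.
rewrite /poly_op /scale mulr_sumr; apply: eq_bigr => n _.
by rewrite iter_scale /scale mulrCA.
Qed.

Lemma wm_nseq j (v : vec R) r c : good j v -> v r != 0 ->
  wm_word (nseq c j ++ r) = wm_word (nseq c j).
Proof.
move=> [g1 g2] hr.
have lr : if r is b :: _ then (b < j)%N else true.
  move: hr; case: r => [|b r] // hr; rewrite ltnNge; apply/negP => /g2 hh.
  by rewrite hh eqxx in hr.
have vr : wm_word r by apply: contraNT hr => /g1 ->.
elim: c => [|c IH] //=.
rewrite !wm_cons IH; case: c {IH} => [|c] //=.
by case: r hr vr lr => [|b r] //= _ _ /ltnW ->.
Qed.

Lemma keyB j (v : vec R) r n c : good j v -> nstart j r ->
  iter n (posop j) v (nseq c j ++ r) = iter n (posop j) (vacuum R) (nseq c j) * v r.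
Proof.
move=> gv hr; elim: n c => [|n IH] c.
  case: c => [|c] /=; first by rewrite /vacuum /basisv eqxx mul1r.
  by rewrite /vacuum /basisv /= gv.2 // mul0r.
rewrite !iterS /posop /ann /cre.
rewrite (IH c.+1).
case: (eqVneq (v r) 0) => [vr0|nz].
  rewrite vr0 !mulr0 if_same add0r.
  case: c => [|c] /=.
    by case: r hr vr0 {IH} => [|a r] //= /negbTE ->.
  by rewrite eqxx /= (IH c) vr0 mulr0 if_same.
have E := wm_nseq _ gv nz.
case: c => [|c] /=.
  have := E 1%N; rewrite /= => ->.
  case: r hr {IH E nz} => [|a r] /= hr.
    by rewrite addr0 mulrDl mul0r addr0; case: ifP; rewrite ?mul0r.
  by rewrite (negbTE hr) /= addr0 mulrDl mul0r addr0; case: ifP; rewrite ?mul0r.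
rewrite eqxx /= (IH c).
have := E c.+2; rewrite /= => ->.
have := E c.+1; rewrite /= => ->.
by rewrite mulrDl; case: ifP => _; case: ifP => _; rewrite ?mul0r ?addr0 ?add0r.
Qed.

Lemma poly_B p j (v : vec R) r : good j v -> nstart j r ->
  poly_op p j v r = omega (poly_op p j) * v r.
Proof.
move=> gv hr; rewrite /poly_op /omega mulr_suml; apply: eq_bigr => n _.
by have := keyB n 0 gv hr; rewrite /= => ->; rewrite mulrA.
Qed.


Lemma prod_cons jp L (v : vec R) : prod_op (jp :: L) v = poly_op jp.2 jp.1 (prod_op L v).
Proof. by []. Qed.

Lemma inc_lemma (L : seq (nat * {poly R})) j p :
  sorted (fun a b => a < b)%N (j :: map fst L) ->
  all (fun jp => no_const jp.2) ((j, p) :: L) ->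
  prod_op ((j, p) :: L) (vacuum R)
  = scale (\prod_(jp <- L) omega (poly_op jp.2 jp.1)) (poly_op p j (vacuum R)).
Proof.
elim: L j p => [|[j' p'] L IH] j p.
  move=> _ _ /=; apply: functional_extensionality => u.
  by rewrite /scale big_nil mul1r.
move=> hs0 ha0.
have /andP [hjj hs] : (j < j')%N && sorted (fun a b => a < b)%N (j' :: map fst L) by exact: hs0.
have /and3P [hp hp' ha] : [&& no_const p, no_const p' & all (fun jp => no_const jp.2) L] by exact: ha0.
rewrite prod_cons (IH j' p' hs); last by rewrite /= hp' ha.
rewrite /= poly_op_scale.
have -> : poly_op p j (poly_op p' j' (vacuum R))
  = poly_op p j (scale (omega (poly_op p' j')) (vacuum R)).
  apply: poly_op_agree hjj _ => // u hu.
  by rewrite (poly_B _ (good_vac j') hu).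
rewrite poly_op_scale big_cons /=.
apply: functional_extensionality => u; rewrite /scale.
by rewrite mulrA [_ * omega _]mulrC.
Qed.

Lemma M2_lemma (L : seq (nat * {poly R})) k :
  (0 < k <= size L)%N ->
  sorted (fun a b => b < a)%N (take k (map fst L)) ->
  sorted (fun a b => a < b)%N (drop k.-1 (map fst L)) ->
  all (fun jp => no_const jp.2) L ->
  omega (prod_op L) = \prod_(jp <- L) omega (poly_op jp.2 jp.1).
Proof.
elim: L k => [|[j p] L IH] [|[|k]] // hk hdec hinc hall.
  rewrite /omega (inc_lemma hinc hall) /scale big_cons /=.
  by rewrite mulrC.
case: L IH hk hdec hinc hall => [|[j2 p2] L] IH // hk hdec hinc hall.
have /andP [hjj hdec'] : (j2 < j)%N && sorted (fun a b => b < a)%N (take k.+1 (map fst ((j2, p2) :: L))) by exact: hdec.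
have /and3P [hp hp2 ha] : [&& no_const p, no_const p2 & all (fun jp => no_const jp.2) L] by exact: hall.
rewrite /omega prod_cons (poly_B _ _ (isT : nstart j [::])); last first.
  by rewrite prod_cons; apply: good_out.
rewrite big_cons; congr (_ * _).
have := IH k.+1 hk hdec' hinc; rewrite /= hp2 ha => /(_ isT).
by rewrite /omega.
Qed.

End H.

Theorem corollary2p3 (R : numClosedFieldType) :
  (* (M1) *)
  (forall (i j k : nat) (pi pj pk : {poly R}),
      (0 < i)%N -> (0 < j)%N -> (0 < k)%N -> (i < j)%N -> (k < j)%N ->
      no_const pi -> no_const pj -> no_const pk ->
      forall w : seq nat, wm_word w ->
        poly_op pi i (poly_op pj j (poly_op pk k (basisv R w)))
        = (fun u => omega (poly_op pj j) * poly_op pi i (poly_op pk k (basisv R w)) u))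
  /\
  (* (M2) *)
  (forall (js : seq nat) (ps : seq {poly R}) (k : nat),
      size ps = size js ->
      all (fun j => 0 < j)%N js ->
      all (@no_const R) ps ->
      (0 < k <= size js)%N ->
      sorted (fun a b => b < a)%N (take k js) ->
      sorted (fun a b => a < b)%N (drop k.-1 js) ->
      omega (prod_op (zip js ps))
      = \prod_(jp <- zip js ps) omega (poly_op jp.2 jp.1)).
Proof.
split.
  move=> i j k pi pj pk _ _ _ hij hkj hpi hpj hpk w _.
  have gv := good_out (basisv R w) hpk hkj.
  rewrite (poly_op_agree (v' := scale (omega (poly_op pj j)) (poly_op pk k (basisv R w))) hpi hij).
    by rewrite poly_op_scale.
  by move=> u hu; rewrite (poly_B _ gv hu).
move=> js ps k hs _ hps hk hdec hinc.
have e1 : map fst (zip js ps) = js by apply: unzip1_zip; rewrite hs.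
have e2 : map snd (zip js ps) = ps by apply: unzip2_zip; rewrite hs.
apply: (M2_lemma (k := k)); rewrite ?e1 ?size_zip ?hs ?minnn //.
by rewrite -e2 all_map in hps.
Qed.
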